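(* Let $p_n:\mathrm{Br}_n\to\widehat{\mathrm S}_n$ be the homomorphism defined on generators by $\sigma_{i,i+1}\mapsto((i\ i{+}1),1)$. Then there is a short exact sequence $1\to\widehat{\mathrm{PBr}}_n\to\mathrm{Br}_n\xrightarrow{p_n}\widehat{\mathrm S}_n\to1$, i.e. $p_n$ is surjective with kernel $\widehat{\mathrm{PBr}}_n$.
   Context: $n\ge2$. $\widehat{\mathrm S}_n=\{(\sigma,d)\in\mathrm S_n\times\mathbb Z: d\text{ odd}\iff\operatorname{sgn}\sigma=-1\}$. $\mathrm{Br}_n$ is the braid group with Artin generators $\sigma_{i,i+1}$; $\mathrm{PBr}_n=\pi_1(\mathrm{Conf}_n(\mathbb C))$ the pure braid group. With $q_n:\mathrm{Conf}_n(\mathbb C)\to\mathbb C^*$, $q_n(x)=\prod_{i<j}(x_i-x_j)$, the Milnor fiber is $F_n=q_n^{-1}(1)$, and $\widehat{\mathrm{PBr}}_n:=\pi_1(F_n)$, identified with the kernel of $\pi_1(q_n):\mathrm{PBr}_n\to\mathbb Z$ (which sends each standard generator $a_{i,j}$ to $1$). *)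

(* Defs.v *)
(* Braid group Br_n presented by Artin generators, as words
   modulo the congruence generated by the braid relations. *)
From mathcomp Require Import all_boot all_order all_algebra all_fingroup.
Set Implicit Arguments. Unset Strict Implicit. Unset Printing Implicit Defensive.
Import GRing.Theory.

(* A letter (k, true) is the Artin generator sigma_{k+1,k+2} (0-based k),
   (k, false) its inverse.  Valid letters for Br_n: k.+1 < n. *)
Definition gen := (nat * bool)%type.
Definition ginv (g : gen) : gen := (g.1, ~~ g.2).
Definition valid_word (n : nat) (w : seq gen) : bool :=
  all (fun g : gen => g.1.+1 < n) w.

Inductive braid_eq (n : nat) : seq gen -> seq gen -> Prop :=
| be_refl w : braid_eq n w w
| be_sym u v : braid_eq n u v -> braid_eq n v u
| be_trans u v w : braid_eq n u v -> braid_eq n v w -> braid_eq n u w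
| be_free u v (g : gen) : g.1.+1 < n ->
    braid_eq n (u ++ g :: ginv g :: v) (u ++ v)
| be_comm u v i j : i.+1 < j -> j.+1 < n ->
    braid_eq n (u ++ (i, true) :: (j, true) :: v) (u ++ (j, true) :: (i, true) :: v)
| be_braid u v i : i.+2 < n ->
    braid_eq n (u ++ [:: (i, true); (i.+1, true); (i, true)] ++ v)
               (u ++ [:: (i.+1, true); (i, true); (i.+1, true)] ++ v).

(* transposition (k k+1) in S_n (identity if out of range) *)
Definition adj_tperm (n k : nat) : 'S_n :=
  match insub k, insub k.+1 with
  | Some a, Some b => tperm a b
  | _, _ => 1%g
  end.

Definition perm_of (n : nat) (w : seq gen) : 'S_n :=
  foldr (fun g s => (adj_tperm n g.1 * s)%g) 1%g w.

Definition esum (w : seq gen) : int :=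
  foldr (fun g z => ((if g.2 then 1 else -1) + z)%R) 0%R w.

Definition in_hatS (n : nat) (x : 'S_n * int) : bool :=
  odd `|x.2|%N == odd_perm x.1.

Definition p_word (n : nat) (w : seq gen) : 'S_n * int := (perm_of n w, esum w).

Definition pure (n : nat) (w : seq gen) : Prop := perm_of n w = 1%g.

(* standard generator a_{i,j} (0-based strands i < j):
   sigma_{j-1} ... sigma_{i+1} sigma_i^2 sigma_{i+1}^{-1} ... sigma_{j-1}^{-1}
   (1-based Artin indices) *)
Definition a_word (i j : nat) : seq gen :=
  [seq (k, true) | k <- rev (iota i.+1 (j - i.+1))] ++
  [:: (i, true); (i, true)] ++
  [seq (k, false) | k <- iota i.+1 (j - i.+1)].

(* phi is a homomorphism PBr_n -> Z sending every a_{i,j} to 1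
   (this is pi_1(q_n)) *)
Definition is_qn_map (n : nat) (phi : seq gen -> int) : Prop :=
  [/\ (forall u v, valid_word n u -> valid_word n v -> pure n u -> pure n v ->
         braid_eq n u v -> phi u = phi v),
      (forall u v, valid_word n u -> valid_word n v -> pure n u -> pure n v ->
         phi (u ++ v) = (phi u + phi v)%R)
    & (forall i j, i < j -> j < n -> phi (a_word i j) = 1%R)].

(* Main.v *)
Require Import Defs.
From mathcomp Require Import all_boot all_order all_algebra all_fingroup.
Require Import Defs.
From Stdlib Require Import Setoid Morphisms.
From mathcomp Require Import zify.
Set Implicit Arguments. Unset Strict Implicit. Unset Printing Implicit Defensive.
Import GRing.Theory.

Lemma be_equiv_inst n : Equivalence (braid_eq n).
Proof. split; [exact: be_refl| exact: be_sym| exact: be_trans]. Qed.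
Existing Instance be_equiv_inst.

Lemma be_ctx n x y u v : braid_eq n u v -> braid_eq n (x ++ u ++ y) (x ++ v ++ y).
Proof.
elim=> {u v}.
- by move=> w; apply: be_refl.
- by move=> u v _ H; apply: be_sym.
- by move=> u v w _ H1 _ H2; apply: be_trans H2.
- move=> u v g Hg. have := be_free (x ++ u) (v ++ y) Hg. by rewrite -!catA /=.
- move=> u v i j H1 H2. have := be_comm (x ++ u) (v ++ y) H1 H2. by rewrite -!catA /=.
- move=> u v i H. have := be_braid (x ++ u) (v ++ y) H. by rewrite -!catA /=.
Qed.

Instance cat_proper n : Proper (braid_eq n ==> braid_eq n ==> braid_eq n) (@cat gen).
Proof.
move=> u u' Hu v v' Hv. apply: be_trans (_ : braid_eq n (u' ++ v) _).
- have := be_ctx [::] v Hu. by rewrite /= .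
- have := be_ctx u' [::] Hv. by rewrite !cats0.
Qed.

Instance cons_proper n g : Proper (braid_eq n ==> braid_eq n) (cons g).
Proof. move=> u v H. have := be_ctx [:: g] [::] H. by rewrite !cats0. Qed.
Definition winv (w : seq gen) : seq gen := rev (map ginv w).

Lemma ginvK : involutive ginv.
Proof. by case=> i b; rewrite /ginv /= negbK. Qed.

Lemma winv_cat u v : winv (u ++ v) = winv v ++ winv u.
Proof. by rewrite /winv map_cat rev_cat. Qed.

Lemma winv_cons g w : winv (g :: w) = winv w ++ [:: ginv g].
Proof. by rewrite /winv /= rev_cons cats1. Qed.

Lemma winvK : involutive winv.
Proof. by move=> w; rewrite /winv map_rev revK -map_comp (eq_map ginvK) map_id. Qed.

Lemma valid_cat n u v : valid_word n (u ++ v) = valid_word n u && valid_word n v.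
Proof. exact: all_cat. Qed.

Lemma valid_winv n w : valid_word n (winv w) = valid_word n w.
Proof. by rewrite /valid_word /winv all_rev all_map. Qed.

Lemma ctxr n u v r : braid_eq n u v -> braid_eq n (u ++ r) (v ++ r).
Proof. by move=> H; rewrite H; reflexivity. Qed.

Lemma ctxl n u v r : braid_eq n u v -> braid_eq n (r ++ u) (r ++ v).
Proof. by move=> H; rewrite H; reflexivity. Qed.

Lemma free_l n g r : g.1.+1 < n -> braid_eq n (g :: ginv g :: r) r.
Proof. move=> H; exact: (be_free [::] r H). Qed.

Lemma free_r n g r : g.1.+1 < n -> braid_eq n (ginv g :: g :: r) r.
Proof. move=> H. have := (be_free [::] r (g := ginv g) H). by rewrite ginvK. Qed.

Lemma cancel_r n w r : valid_word n w -> braid_eq n (w ++ winv w ++ r) r.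
Proof.
elim: w r => [|g w IH] r //=; first reflexivity.
move=> /andP[Hg Hw]. rewrite winv_cons -catA /=.
rewrite (IH (ginv g :: r) Hw). exact: free_l.
Qed.

Lemma cancel_l n w r : valid_word n w -> braid_eq n (winv w ++ w ++ r) r.
Proof.
move=> Hw. have := @cancel_r n (winv w) r. rewrite winvK valid_winv. exact.
Qed.

Definition far (i j : nat) := (i.+1 < j) || (j.+1 < i).

Lemma flip_l n g h : g.1.+1 < n -> h.1.+1 < n ->
  (forall r, braid_eq n (g :: h :: r) (h :: g :: r)) ->
  (forall r, braid_eq n (ginv g :: h :: r) (h :: ginv g :: r)).
Proof.
move=> Hg Hh H r.
transitivity (ginv g :: h :: g :: ginv g :: r).
  by rewrite (free_l r Hg); reflexivity.
rewrite -(H (ginv g :: r)). exact: free_r.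
Qed.

Lemma comm_pp n i j r : far i j -> i.+1 < n -> j.+1 < n ->
  braid_eq n ((i,true) :: (j,true) :: r) ((j,true) :: (i,true) :: r).
Proof.
case/orP=> H Hi Hj; first exact: (be_comm [::] r H Hj).
symmetry; exact: (be_comm [::] r H Hi).
Qed.

Lemma comm_ll n g h r : far g.1 h.1 -> g.1.+1 < n -> h.1.+1 < n ->
  braid_eq n (g :: h :: r) (h :: g :: r).
Proof.
case: g => i b; case: h => j c /= Hf Hi Hj.
have Hpp := fun r => comm_pp r Hf Hi Hj.
have Hnp : forall r, braid_eq n ((i,false) :: (j,true) :: r) ((j,true) :: (i,false) :: r).
  exact: (flip_l (g := (i,true)) (h := (j,true))).
have Hpn : forall r, braid_eq n ((i,true) :: (j,false) :: r) ((j,false) :: (i,true) :: r).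
  move=> r'; symmetry; apply: (flip_l (g := (j,true)) (h := (i,true))) => // r''.
  by symmetry.
have Hnn : forall r, braid_eq n ((i,false) :: (j,false) :: r) ((j,false) :: (i,false) :: r).
  move=> r'; symmetry; apply: (flip_l (g := (j,true)) (h := (i,false))) => // r''.
  by symmetry.
by case: b; case: c.
Qed.

Lemma comm_word n g w r : g.1.+1 < n -> valid_word n w -> all (fun h => far g.1 h.1) w ->
  braid_eq n (g :: w ++ r) (w ++ g :: r).
Proof.
move=> Hg; elim: w => [|h w IH] /=; first by move=> *; reflexivity.
move=> /andP[Hh Hw] /andP[Hf Hfw].
rewrite comm_ll //. rewrite IH //; reflexivity.
Qed.

Lemma braid_pos n i r : i.+2 < n ->
  braid_eq n ((i,true) :: (i.+1,true) :: (i,true) :: r)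
             ((i.+1,true) :: (i,true) :: (i.+1,true) :: r).
Proof. move=> H; exact: (be_braid [::] r H). Qed.

Lemma conj_inv1 n x w y : valid_word n x -> valid_word n w -> valid_word n y ->
  braid_eq n (x ++ w) (w ++ y) -> braid_eq n (winv x ++ w) (w ++ winv y).
Proof.
move=> Hx Hw Hy H.
transitivity (winv x ++ w ++ y ++ winv y ++ [::]).
  by rewrite (cancel_r [::] Hy) cats0; reflexivity.
rewrite [w ++ y ++ _]catA -H -catA (cancel_l _ Hx) cats0; reflexivity.
Qed.

Lemma conj_inv2 n x w y : valid_word n x -> valid_word n w -> valid_word n y ->
  braid_eq n (x ++ w) (w ++ y) -> braid_eq n (y ++ winv w) (winv w ++ x).
Proof.
move=> Hx Hw Hy H.
transitivity (winv w ++ w ++ y ++ winv w).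
  by rewrite (cancel_l _ Hw); reflexivity.
rewrite [w ++ y ++ _]catA -H -catA -{2}(cats0 (winv w)) (cancel_r [::] Hw) cats0; reflexivity.
Qed.

Definition R (m j : nat) : seq gen := [seq (k, true) | k <- rev (iota j (m - j))].

Lemma R_rec m j : j < m -> R m j = R m j.+1 ++ [:: (j, true)].
Proof.
move=> H. rewrite /R. have -> : m - j = (m - j.+1).+1 by lia.
by rewrite /= rev_cons map_rcons cats1.
Qed.

Lemma R_mm m : R m m = [::].
Proof. by rewrite /R subnn. Qed.

Lemma R_letters m j : all (fun h : gen => (j <= h.1 < m) && h.2) (R m j).
Proof.
rewrite /R all_map all_rev. apply/allP => k; rewrite mem_iota => /andP[H1 H2] /=.
rewrite H1 /=. lia.
Qed.

Lemma winvR_letters m j : all (fun h : gen => (j <= h.1 < m)) (winv (R m j)).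
Proof.
rewrite /winv all_rev all_map. apply/allP => h Hh /=. 
by move/allP: (R_letters m j) => /(_ h Hh) /andP[].
Qed.

Lemma all_valid n m (w : seq gen) j : m < n -> all (fun h : gen => j <= h.1 < m) w -> valid_word n w.
Proof. move=> Hm /allP H; apply/allP => h /H /andP[_ ?]; lia. Qed.

Lemma all_far k (w : seq gen) j m : k.+1 < j -> all (fun h : gen => j <= h.1 < m) w ->
  all (fun h => far k h.1) w.
Proof. move=> Hk /allP H; apply/allP => h /H /andP[? _]; rewrite /far; lia. Qed.

Lemma R_letters' m j : all (fun h : gen => (j <= h.1 < m)) (R m j).
Proof. apply/allP => h /(allP (R_letters m j)) /andP[]//. Qed.

Lemma validR n m j : m < n -> valid_word n (R m j).
Proof. move=> H; exact: all_valid H (R_letters' m j). Qed.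

Lemma validwR n m j : m < n -> valid_word n (winv (R m j)).
Proof. move=> H; exact: all_valid H (winvR_letters m j). Qed.

Lemma a_wordE i m : a_word i m = R m i.+1 ++ [:: (i,true); (i,true)] ++ winv (R m i.+1).
Proof.
rewrite /a_word /R /winv -map_comp; congr (_ ++ _ ++ _); by rewrite map_rev revK.
Qed.

Lemma a_letters i m : i < m -> all (fun h : gen => i <= h.1 < m) (a_word i m).
Proof.
move=> H. rewrite a_wordE !all_cat /= H leqnn /=.
apply/andP; split.
- apply/allP => h /(allP (R_letters' m i.+1)) /andP[? ?]; lia.
- apply/allP => h /(allP (winvR_letters m i.+1)) /andP[? ?]; lia.
Qed.

Lemma valid_a n i m : m < n -> i < m -> valid_word n (a_word i m).
Proof. move=> H1 H2; exact: all_valid H1 (a_letters H2). Qed.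

Lemma L_R n m j k r : m < n -> j <= k -> k.+1 < m ->
  braid_eq n ((k,true) :: R m j ++ r) (R m j ++ (k.+1,true) :: r).
Proof.
move=> Hm Hjk Hk. move Hd: (k - j) => d. elim: d j Hjk Hd r => [|d IH] j Hjk Hd r.
- have -> : j = k by lia.
  rewrite (R_rec (_ : k < m)); last lia. rewrite (R_rec (_ : k.+1 < m)) //.
  rewrite -!catA /=.
  rewrite (comm_word (g := (k,true))) /=; [| lia | apply: validR; lia |].
  + rewrite braid_pos; [reflexivity| lia].
  + exact: all_far (R_letters' m k.+2).
- rewrite (R_rec (_ : j < m)); last lia. rewrite -!catA /=.
  rewrite IH; [|lia|lia]. rewrite comm_ll /=; [reflexivity|rewrite /far; lia|lia|lia].
Qed.

Lemma L_Rs n m j k b r : m < n -> j <= k -> k.+1 < m ->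
  braid_eq n (R m j ++ (k.+1,b) :: r) ((k,b) :: R m j ++ r).
Proof.
move=> Hm Hjk Hk. case: b.
- symmetry; exact: L_R.
- have E : braid_eq n ((k,false) :: R m j) (R m j ++ [:: (k.+1,false)]).
    have := @conj_inv1 n [:: (k,true)] (R m j) [:: (k.+1,true)]; apply.
    + rewrite /valid_word /=; lia.
    + exact: (@validR n m j Hm).
    + rewrite /valid_word /=; lia.
    + have := @L_R n m j k [::] Hm Hjk Hk. by rewrite cats0.
  rewrite -[(k,false) :: _]/(((k,false) :: R m j) ++ r) E -catA; reflexivity.
Qed.

Lemma L_Rinv n m j k r : m < n -> j <= k -> k.+1 < m ->
  braid_eq n ((k.+1,true) :: winv (R m j) ++ r) (winv (R m j) ++ (k,true) :: r).
Proof.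
move=> Hm Hjk Hk.
have E : braid_eq n ([:: (k.+1,true)] ++ winv (R m j)) (winv (R m j) ++ [:: (k,true)]).
  have := @conj_inv2 n [:: (k,true)] (R m j) [:: (k.+1,true)]; apply.
  + rewrite /valid_word /=; lia.
  + exact: (@validR n m j Hm).
  + rewrite /valid_word /=; lia.
  + have := @L_R n m j k [::] Hm Hjk Hk. by rewrite cats0.
rewrite -[(k.+1,true) :: _]/(([:: (k.+1,true)] ++ winv (R m j)) ++ r) E -catA; reflexivity.
Qed.

Lemma C_far n m i k r : m < n -> i < m -> k.+1 < i ->
  braid_eq n ((k,true) :: a_word i m ++ (k,false) :: r) (a_word i m ++ r).
Proof.
move=> Hm Hi Hk.
rewrite (comm_word (g := (k,true))) /=; [|lia|exact: valid_a|exact: all_far (a_letters Hi)].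
rewrite (free_l (g := (k,true))) /=; [reflexivity|lia].
Qed.

Lemma C_gt n m i k r : m < n -> i < k -> k.+1 < m ->
  braid_eq n ((k,true) :: a_word i m ++ (k,false) :: r) (a_word i m ++ r).
Proof.
move=> Hm Hi Hk. rewrite a_wordE -!catA /=.
rewrite L_R //. rewrite (comm_ll (g := (k.+1,true))) /=; [|rewrite /far; lia|lia|lia].
rewrite (comm_ll (g := (k.+1,true))) /=; [|rewrite /far; lia|lia|lia].
rewrite L_Rinv //. rewrite (free_l (g := (k,true))) /=; [reflexivity|lia].
Qed.

Lemma C_eq n m i r : m < n -> i.+1 < m ->
  braid_eq n ((i,true) :: a_word i m ++ (i,false) :: r) (a_word i.+1 m ++ r).
Proof.
move=> Hm Hi. rewrite !a_wordE (R_rec Hi) winv_cat /= -!catA /=.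
rewrite (comm_word (g := (i,true))) /=; [|lia|exact: validR|exact: all_far (R_letters' m i.+2)].
rewrite braid_pos; last lia.
rewrite braid_pos; last lia.
rewrite (free_l (g := (i.+1,true))) /=; last lia.
rewrite (comm_word (g := (i,true))) /=; [|lia|exact: validwR|exact: all_far (winvR_letters m i.+2)].
rewrite (free_l (g := (i,true))) /=; [reflexivity|lia].
Qed.

Lemma C_m1 n m i r : m < n -> 0 < i -> i < m ->
  braid_eq n ((i.-1,false) :: a_word i m ++ (i.-1,true) :: r) (a_word i.-1 m ++ r).
Proof.
move=> Hm H0 Hi.
have E := @C_eq n m i.-1 ((i.-1,true) :: r) Hm.
rewrite prednK // in E. rewrite -E; last lia.
rewrite (free_r (g := (i.-1,true))) /=; last lia.
rewrite (free_r (g := (i.-1,true))); [reflexivity|simpl; lia].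
Qed.

Definition sw k y := if y == k then k.+1 else if y == k.+1 then k else y.
Lemma swc i j y : i.+1 < j -> sw j (sw i y) = sw i (sw j y).
Proof. rewrite /sw => H; repeat case: eqP; lia. Qed.
Lemma swb i y : sw i (sw i.+1 (sw i y)) = sw i.+1 (sw i (sw i.+1 y)).
Proof. rewrite /sw; repeat case: eqP; lia. Qed.

Lemma adj_tpermE n k (x : 'I_n) : k.+1 < n -> val (adj_tperm n k x) = sw k (val x).
Proof.
move=> H. rewrite /adj_tperm.
case: insubP => [a _ Ea|/negP]; last lia.
case: insubP => [b _ Eb|/negP]; last lia.
rewrite permE /= /sw -(inj_eq val_inj) Ea -(inj_eq val_inj) Eb.
by case: ifP => _ //; case: ifP.
Qed.

Lemma adj_tperm_out n k : ~~ (k.+1 < n) -> adj_tperm n k = 1%g.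
Proof.
move=> H. rewrite /adj_tperm. case: insubP => [a _ Ea|//].
case: insubP => [b Hb Eb|//]. by rewrite Hb in H.
Qed.

Lemma adj_tpermK n k : (adj_tperm n k * adj_tperm n k = 1)%g.
Proof.
rewrite /adj_tperm. case: insub => [a|]; last by rewrite mulg1.
case: insub => [b|]; last by rewrite mulg1.
by rewrite -{1}(tpermV a b) mulVg.
Qed.

Lemma adj_tpermV n k : ((adj_tperm n k)^-1 = adj_tperm n k)%g.
Proof. apply: (mulgI (adj_tperm n k)). by rewrite mulgV adj_tpermK. Qed.

Lemma perm_of_cons n g w : perm_of n (g :: w) = (adj_tperm n g.1 * perm_of n w)%g.
Proof. by []. Qed.

Lemma perm_of_cat n u v : perm_of n (u ++ v) = (perm_of n u * perm_of n v)%g.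
Proof. elim: u => [|g u IH] /=; first by rewrite mul1g. by rewrite IH mulgA. Qed.

Lemma perm_of_winv n w : perm_of n (winv w) = (perm_of n w)^-1%g.
Proof.
elim: w => [|g w IH]; first by rewrite invg1.
by rewrite winv_cons perm_of_cat IH /= mulg1 invMg adj_tpermV.
Qed.

Lemma esum_cat u v : esum (u ++ v) = (esum u + esum v)%R.
Proof. elim: u => [|g u IH] /=; first by rewrite add0r. by rewrite IH addrA. Qed.

Lemma esum_winv w : esum (winv w) = (- esum w)%R.
Proof.
elim: w => [|g w IH]; first by rewrite oppr0.
rewrite winv_cons esum_cat IH /= opprD addr0. case: g.2 => //=; by rewrite addrC.
Qed.

Lemma perm_val_eq n (s t : 'S_n) : (forall x : 'I_n, val (s x) = val (t x)) -> s = t.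
Proof. move=> H; apply/permP => x; apply: val_inj; exact: H. Qed.

Lemma be_perm n u v : braid_eq n u v -> perm_of n u = perm_of n v.
Proof.
elim=> {u v} [w|u v H0 H|u v w H0 H1 H3 H2|u v g Hg|u v i j H1 H2|u v i H] //.
- by rewrite H1 H2.
- by rewrite !perm_of_cat /= /ginv /= [X in (_ * X)%g]mulgA adj_tpermK mul1g.
- rewrite !perm_of_cat /=. congr (_ * _)%g. rewrite !mulgA. congr (_ * _)%g.
  apply: perm_val_eq => x. rewrite !permM !adj_tpermE //; try lia. exact: swc.
- rewrite !perm_of_cat /=. congr (_ * _)%g. rewrite !mulgA. congr (_ * _)%g.
  apply: perm_val_eq => x. rewrite !mulg1 !permM !adj_tpermE //; try lia. by rewrite swb.
Qed.

Lemma be_esum n u v : braid_eq n u v -> esum u = esum v.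
Proof.
elim=> {u v} [w|u v H0 H|u v w H0 H1 H3 H2|u v g Hg|u v i j H1 H2|u v i H] //.
- by rewrite H1 H2.
- rewrite !esum_cat /=. congr (_ + _)%R.
  case: g.2 => /=; by rewrite addrA ?subrr ?addNr add0r.
- rewrite !esum_cat /=. by [].
- rewrite !esum_cat /=. by [].
Qed.

Lemma odd_step (b : bool) (z : int) :
  odd `|((if b then 1 else -1) + z)%R|%N = ~~ odd `|z|%N.
Proof.
rewrite -oddS. case: b.
- have : (`|(1 + z)%R|%N %% 2 = (`|z|%N.+1) %% 2)%N by lia.
  rewrite !modn2. by case: odd; case: odd.
- have : (`|(-1 + z)%R|%N %% 2 = (`|z|%N.+1) %% 2)%N by lia.
  rewrite !modn2. by case: odd; case: odd.
Qed.

Lemma hatS_word n w : valid_word n w -> odd `|esum w|%N = odd_perm (perm_of n w).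
Proof.
elim: w => [|g w IH] /=; first by rewrite odd_perm1.
move=> /andP[Hg Hw]. rewrite odd_step IH // odd_permM.
rewrite /adj_tperm. case: insubP => [a _ Ea|/negP]; last lia.
case: insubP => [b _ Eb|/negP]; last lia.
rewrite odd_tperm. have -> : (a != b) by rewrite -(inj_eq val_inj) Ea Eb; lia.
done.
Qed.

Definition good n (psi : seq gen -> int) :=
  [/\ (forall u v, valid_word n u -> valid_word n v -> pure n u -> pure n v ->
         braid_eq n u v -> psi u = psi v),
      (forall u v, valid_word n u -> valid_word n v -> pure n u -> pure n v ->
         psi (u ++ v) = (psi u + psi v)%R)
    & (forall i j, i < j -> j < n -> psi (a_word i j) = 0%R)].

Lemma pure_nil n : pure n [::].
Proof. by []. Qed.

Lemma pure_cat n u v : pure n u -> pure n v -> pure n (u ++ v).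
Proof. rewrite /pure perm_of_cat => -> ->; exact: mulg1. Qed.

Lemma pure_winv n u : pure n u -> pure n (winv u).
Proof. rewrite /pure perm_of_winv => ->; exact: invg1. Qed.

Lemma pure_conj n g q : pure n q -> pure n (g ++ q ++ winv g).
Proof. rewrite /pure !perm_of_cat perm_of_winv => ->. by rewrite mul1g mulgV. Qed.

Lemma pure_a n i j : pure n (a_word i j).
Proof.
rewrite a_wordE /pure !perm_of_cat perm_of_winv /= mulg1 adj_tpermK mul1g mulgV //.
Qed.

Lemma valid_mono m n w : m <= n -> valid_word m w -> valid_word n w.
Proof. move=> H /allP Hw; apply/allP => g /Hw; lia. Qed.

Lemma psi_nil n psi : good n psi -> psi [::] = 0%R.
Proof.
case=> _ Hadd _. have := Hadd [::] [::] isT isT (pure_nil n) (pure_nil n).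
rewrite cats0. lia.
Qed.

Lemma psi_winv n psi x : good n psi -> valid_word n x -> pure n x ->
  psi (winv x) = (- psi x)%R.
Proof.
move=> G Hx Px. case: (G) => Hinv Hadd _.
have Vw : valid_word n (winv x) by rewrite valid_winv.
have := Hadd x (winv x) Hx Vw Px (pure_winv Px).
rewrite (Hinv _ [::]) ?(psi_nil G) //.
- lia.
- by rewrite valid_cat Hx Vw.
- exact: pure_cat (pure_winv Px).
- have := cancel_r [::] Hx. by rewrite cats0.
Qed.

Lemma psi_conj n psi g1 g2 q : good n psi -> valid_word n g1 -> valid_word n g2 ->
  valid_word n q -> pure n q -> perm_of n g1 = perm_of n g2 ->
  psi (g1 ++ q ++ winv g1) = psi (g2 ++ q ++ winv g2).
Proof.
move=> G V1 V2 Vq Pq E. case: (G) => Hinv Hadd _.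
set x := g2 ++ winv g1.
have Vx : valid_word n x by rewrite valid_cat V2 valid_winv.
have Px : pure n x by rewrite /pure perm_of_cat perm_of_winv E mulgV.
have Vc : valid_word n (g1 ++ q ++ winv g1) by rewrite !valid_cat V1 Vq valid_winv V1.
have Pc := pure_conj g1 Pq.
have Vxi : valid_word n (winv x) by rewrite valid_winv.
rewrite [RHS](Hinv _ (x ++ (g1 ++ q ++ winv g1) ++ winv x)).
- rewrite (Hadd x) //; [| by rewrite valid_cat Vc Vxi | exact: pure_cat Pc (pure_winv Px)].
  rewrite (Hadd _ (winv x)) //; last exact: pure_winv Px.
  rewrite (psi_winv G) //; lia.
- by rewrite !valid_cat V2 Vq valid_winv V2.
- by rewrite !valid_cat !valid_winv V1 Vq /= V2 Vx.
- exact: pure_conj.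
- exact: pure_cat Px (pure_cat Pc (pure_winv Px)).
- rewrite /x winv_cat winvK -!catA.
  rewrite (cancel_l _ V1) (cancel_l _ V1). reflexivity.
Qed.

Lemma valid1 n k c : k.+1 < n -> valid_word n [:: (k,c)].
Proof. by rewrite /valid_word /= => ->. Qed.

Lemma psi_transfer n psi b k c A A' : good n psi -> valid_word n b -> k.+1 < n ->
  valid_word n A -> pure n A -> valid_word n A' -> pure n A' ->
  braid_eq n ([:: (k,c)] ++ A ++ winv [:: (k,c)]) A' ->
  psi (b ++ [:: (k,c)] ++ A ++ winv [:: (k,c)] ++ winv b) = psi (b ++ A' ++ winv b).
Proof.
move=> G Vb Hk VA PA VA' PA' E. case: (G) => Hinv _ _.
have V1 := @valid1 n k c Hk.
have Pq : pure n ([:: (k,c)] ++ A ++ winv [:: (k,c)]) by exact: pure_conj.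
apply: Hinv.
- by rewrite !valid_cat Vb V1 VA valid_winv V1 valid_winv Vb.
- by rewrite !valid_cat Vb VA' valid_winv Vb.
- by have := pure_conj b Pq; rewrite -!catA.
- exact: pure_conj.
- by have := ctxl b (ctxr (winv b) E); rewrite -!catA.
Qed.

Lemma psi_M n psi m b i : good n psi -> m < n -> valid_word m b -> i < m ->
  psi (b ++ a_word i m ++ winv b) = 0%R.
Proof.
move=> G Hm. case: (G) => Hinv Hadd Ha.
elim/last_ind: b i => [|b g IH] i.
- move=> _ Hi. by rewrite cats0 Ha.
- rewrite /valid_word all_rcons => /andP[Hg Vb] Hi.
  have Vbn : valid_word n b by apply: valid_mono Vb; lia.
  set k := g.1.
  have Hk : k.+1 < n by lia.
  have Hred : forall c, psi (rcons b g ++ a_word i m ++ winv (rcons b g)) =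
        psi (b ++ [:: (k,c)] ++ a_word i m ++ winv [:: (k,c)] ++ winv b).
    move=> c. rewrite (psi_conj (g2 := b ++ [:: (k,c)]) G).
    + by rewrite winv_cat -!catA.
    + by rewrite -cats1 valid_cat Vbn /valid_word /= Hk.
    + by rewrite valid_cat Vbn valid1.
    + exact: valid_a.
    + exact: pure_a.
    + by rewrite -cats1 !perm_of_cat.
  have VA : forall j, j < m -> valid_word n (a_word j m) by move=> j Hj; exact: valid_a.
  have Fin : forall c j, j < m -> braid_eq n ([:: (k,c)] ++ a_word i m ++ winv [:: (k,c)]) (a_word j m) ->
      psi (rcons b g ++ a_word i m ++ winv (rcons b g)) = 0%R.
    move=> c j Hj E. rewrite (Hred c) (psi_transfer G Vbn Hk (VA i Hi) (pure_a n i m) (VA j Hj) (pure_a n j m) E).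
    exact: IH.
  case: (ltngtP k.+1 i) => H1.
  + apply: (Fin true i Hi). have := @C_far n m i k [::] Hm Hi H1. by rewrite cats0.
  + case: (ltngtP k i) => H2; first lia.
    * apply: (Fin true i Hi). have := @C_gt n m i k [::] Hm H2 Hg. by rewrite cats0.
    * have Hi1 : i.+1 < m by lia.
      apply: (Fin true i.+1 Hi1). have := @C_eq n m i [::] Hm Hi1. rewrite cats0 H2. done.
  + apply: (Fin false i.-1); first lia.
    have := @C_m1 n m i [::] Hm _ Hi. rewrite cats0 -H1 /=. apply. lia.
Qed.

Lemma winv_a k m : winv (a_word k m) = R m k.+1 ++ [:: (k,false); (k,false)] ++ winv (R m k.+1).
Proof. by rewrite a_wordE !winv_cat winvK catA. Qed.

Lemma R_c n m k : k < m -> m < n ->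
  braid_eq n (R m k.+1 ++ [:: (k,false)]) (winv (a_word k m) ++ R m k).
Proof.
move=> Hk Hm. rewrite winv_a (R_rec Hk) -!catA /=.
rewrite (cancel_l _ (validR _ Hm)) /=.
rewrite (free_r (g := (k,true))) /=; [reflexivity|lia].
Qed.

Lemma R_d n m j : j < m -> m < n ->
  braid_eq n (R m j ++ [:: (j,true)]) (a_word j m ++ R m j.+1).
Proof.
move=> Hj Hm. rewrite -[X in braid_eq _ _ X]cats0 a_wordE (R_rec Hj) -!catA /=.
rewrite (cancel_l _ (validR _ Hm)) /=. reflexivity.
Qed.

Lemma R_e n m j : j < m -> m < n ->
  braid_eq n (R m j ++ [:: (j,false)]) (R m j.+1).
Proof.
move=> Hj Hm. rewrite (R_rec Hj) -!catA /=.
rewrite (free_l (g := (j,true))) /=; last lia. rewrite cats0; reflexivity.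
Qed.

Lemma fix_b n m b (x : 'I_n) : m < n -> valid_word m b -> val x = m -> val (perm_of n b x) = m.
Proof.
move=> Hm; elim: b x => [|g b IH] x; first by rewrite /= perm1.
move=> /andP[Hg Hb] Hx. rewrite perm_of_cons permM. apply: IH => //.
rewrite adj_tpermE; last lia. rewrite Hx /sw. case: eqP; first lia. case: eqP; lia.
Qed.

Lemma perm_R n m j (x : 'I_n) : j <= m -> m < n -> val x = m -> val (perm_of n (R m j) x) = j.
Proof.
move=> Hj Hm Hx. move Hd: (m - j) => d. elim: d j Hj Hd => [|d IH] j Hj Hd.
- have -> : j = m by lia. by rewrite R_mm /= perm1.
- rewrite (R_rec (_ : j < m)); last lia. rewrite perm_of_cat permM /= mulg1.
  rewrite adj_tpermE; last lia. rewrite (IH j.+1) //; try lia. rewrite /sw. case: eqP; first lia.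
  by rewrite eqxx.
Qed.

Lemma conjA_pos n psi m b i : good n psi -> m < n -> valid_word m b -> i < m ->
  [/\ valid_word n (b ++ a_word i m ++ winv b), pure n (b ++ a_word i m ++ winv b)
     & psi (b ++ a_word i m ++ winv b) = 0%R].
Proof.
move=> G Hm Vb Hi.
have Vbn : valid_word n b by apply: valid_mono Vb; lia.
have VA := @valid_a n i m Hm Hi.
split.
- by rewrite valid_cat Vbn valid_cat VA valid_winv Vbn.
- exact/pure_conj/pure_a.
- exact: psi_M G Hm Vb Hi.
Qed.

Lemma conjA_neg n psi m b i : good n psi -> m < n -> valid_word m b -> i < m ->
  [/\ valid_word n (b ++ winv (a_word i m) ++ winv b), pure n (b ++ winv (a_word i m) ++ winv b)
     & psi (b ++ winv (a_word i m) ++ winv b) = 0%R].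
Proof.
move=> G Hm Vb Hi.
have Vbn : valid_word n b by apply: valid_mono Vb; lia.
have VA := @valid_a n i m Hm Hi.
have [V1 P1 H1] := conjA_pos G Hm Vb Hi.
have E : b ++ winv (a_word i m) ++ winv b = winv (b ++ a_word i m ++ winv b)
  by rewrite !winv_cat winvK catA.
rewrite E; split.
- by rewrite valid_winv.
- exact: pure_winv.
- by rewrite (psi_winv G) // H1 oppr0.
Qed.

Lemma walk n psi m : good n psi -> m < n -> forall w, valid_word m.+1 w ->
  exists P b j, [/\ j <= m, valid_word n P /\ pure n P, psi P = 0%R, valid_word m b
                 & braid_eq n w (P ++ b ++ R m j)].
Proof.
move=> G Hm. case: (G) => Hinv Hadd Ha.
elim/last_ind => [|w g IH].
- move=> _. exists [::], [::], m. split => //; first exact: psi_nil G. rewrite R_mm; reflexivity.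
- rewrite -cats1 valid_cat => /andP[Vw Hg].
  have [P [b [j [Hj [VP PP] HP Vb E]]]] := IH Vw.
  have Vbn : valid_word n b by apply: valid_mono Vb; lia.
  have E' : braid_eq n (w ++ [:: g]) (P ++ b ++ R m j ++ [:: g]).
    by rewrite E -!catA; reflexivity.
  case: g Hg E' => k s Hg E'. have Hk : k.+1 < m.+1 by move: Hg; rewrite /valid_word /= andbT. clear Hg.
  case: (ltnP k.+1 j) => H1.
  + exists P, (b ++ [:: (k,s)]), j. split => //.
    * rewrite valid_cat Vb /valid_word /=; lia.
    * rewrite E' -!catA. apply: ctxl. apply: ctxl. symmetry.
      have := @comm_word n (k,s) (R m j) [::]. rewrite cats0. apply => /=; first lia.
      -- exact: validR.
      -- exact: all_far (R_letters' m j).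
  + case: (ltngtP k j) => H2.
    * have Ej : j = k.+1 by lia. subst j. case: s E' => E'.
      -- exists P, b, k. split => //; first lia.
         rewrite E' (@R_rec m k) -?catA; [reflexivity|lia].
      -- have Hkm : k < m by lia.
         have [Vq Pq Hq] := @conjA_neg n psi m b k G Hm Vb Hkm.
         exists (P ++ (b ++ winv (a_word k m) ++ winv b)), b, k. split => //.
         ++ lia.
         ++ split; [by rewrite valid_cat VP | exact: pure_cat].
         ++ by rewrite Hadd // HP Hq addr0.
         ++ rewrite E' (@R_c n m k) //; try lia. rewrite -!catA (cancel_l _ Vbn). reflexivity.
    * exists P, (b ++ [:: (k.-1, s)]), j. split => //.
      -- rewrite valid_cat Vb /valid_word /=; lia.
      -- rewrite E' -!catA. apply: ctxl. apply: ctxl.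
         have := @L_Rs n m j k.-1 s [::] Hm. rewrite prednK; last lia. rewrite cats0 => ->; [reflexivity|lia|lia].
    * subst k. case: s E' => E'.
      -- have Hkm : j < m by lia.
         have [Vq Pq Hq] := @conjA_pos n psi m b j G Hm Vb Hkm.
         exists (P ++ (b ++ a_word j m ++ winv b)), b, j.+1. split => //.
         ++ split; [by rewrite valid_cat VP | exact: pure_cat].
         ++ by rewrite Hadd // HP Hq addr0.
         ++ rewrite E' (@R_d n m j) //; try lia. rewrite -!catA (cancel_l _ Vbn). reflexivity.
      -- exists P, b, j.+1. split => //.
         rewrite E' (@R_e n m j) //; reflexivity.
Qed.

Lemma psi_zero n psi : good n psi -> forall m, m <= n ->
  forall w, valid_word m w -> pure n w -> psi w = 0%R.
Proof.
move=> G. case: (G) => Hinv Hadd Ha.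
elim=> [|m IH] Hmn w.
- case: w => [_ _|g w /andP[H _]]; first exact: psi_nil G.
  by rewrite ltn0 in H.
- move=> Vw Pw. have Hm : m < n by lia.
  have [P [b [j [Hj [VP PP] HP Vb E]]]] := walk G Hm Vw.
  have Vbn : valid_word n b by apply: valid_mono Vb; lia.
  have Ep := be_perm E.
  rewrite !perm_of_cat PP mul1g in Ep.
  have Ejm : j = m.
    pose x := Ordinal Hm.
    have H1 : val (perm_of n b x) = m by apply: fix_b.
    have H2 := @perm_R n m j (perm_of n b x) Hj Hm H1.
    have := congr1 (fun s : 'S_n => val (s x)) Ep.
    rewrite Pw perm1 permM H2 /=. lia.
  subst j. rewrite R_mm cats0 in E.
  have Pb : pure n b by move: Ep; rewrite R_mm /= mulg1 Pw.
  rewrite (Hinv _ (P ++ b)) //.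
  + rewrite Hadd // HP (IH _ b) //; lia.
  + have : valid_word (m.+1) w := Vw. apply: valid_mono; lia.
  + by rewrite valid_cat VP.
  + exact: pure_cat.
Qed.

Definition reach n (s : 'S_n) := exists w, valid_word n w /\ perm_of n w = s.

Lemma reach1 n : reach (1%g : 'S_n).
Proof. by exists [::]. Qed.

Lemma reachM n (s t : 'S_n) : reach s -> reach t -> reach (s * t)%g.
Proof.
move=> [u [Vu <-]] [v [Vv <-]]. exists (u ++ v). by rewrite valid_cat Vu Vv perm_of_cat.
Qed.

Lemma adj_tperm_tperm n (x y : 'I_n) : val y = (val x).+1 -> adj_tperm n (val x) = tperm x y.
Proof.
move=> Hy. apply: perm_val_eq => z. rewrite adj_tpermE; last by rewrite -Hy ltn_ord.
rewrite permE /= /sw -(inj_eq val_inj) -[z == y](inj_eq val_inj) Hy.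
by case: eqP => //; case: eqP.
Qed.

Lemma reach_adj n (x y : 'I_n) : val y = (val x).+1 -> reach (tperm x y).
Proof.
move=> Hy. exists [:: (val x, true)]. split.
- by rewrite /valid_word /= -Hy ltn_ord.
- by rewrite /= mulg1 (adj_tperm_tperm Hy).
Qed.

Lemma reach_tperm_lt n d : forall (x y : 'I_n), nat_of_ord y = (nat_of_ord x + d).+1 -> reach (tperm x y).
Proof.
elim: d => [|d IH] x y Hy; first by apply: reach_adj; rewrite /= Hy addn0.
have Hy' : (nat_of_ord y).-1 < n by have := ltn_ord y; lia.
pose y' := Ordinal Hy'.
have E : tperm x y = (tperm y' y * tperm x y' * tperm y' y)%g.
  have := tpermJ x y' (tperm y' y). rewrite /conjg tpermV.
  rewrite tpermL tpermD //.
  + by rewrite mulgA => <-.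
  + rewrite -(inj_eq val_inj) /=; lia.
  + rewrite -(inj_eq val_inj) /=; lia.
rewrite E. have Ht : reach (tperm y' y) by apply: reach_adj => /=; lia.
apply: reachM => //. apply: reachM => //. apply: IH => /=. lia.
Qed.

Lemma reach_all n (s : 'S_n) : reach s.
Proof.
have [ts -> _] := prod_tpermP s.
elim: ts => [|[x y] ts IH]; first by rewrite big_nil; exact: reach1.
rewrite big_cons /=. apply: reachM => //.
case: (ltngtP (nat_of_ord x) (nat_of_ord y)) => H.
- apply: (@reach_tperm_lt n ((nat_of_ord y) - (nat_of_ord x)).-1). lia.
- rewrite tpermC. apply: (@reach_tperm_lt n ((nat_of_ord x) - (nat_of_ord y)).-1). lia.
- have -> : x = y by apply: val_inj. rewrite tperm1. exact: reach1.
Qed.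

Fixpoint sqw (k : nat) (c : bool) : seq gen :=
  if k is k'.+1 then (0, c) :: (0, c) :: sqw k' c else [::].

Lemma valid_sqw n k c : 1 < n -> valid_word n (sqw k c).
Proof. move=> H; elim: k => //= k ->; by rewrite H. Qed.

Lemma perm_sqw n k c : perm_of n (sqw k c) = 1%g.
Proof. elim: k => //= k ->. by rewrite mulg1 adj_tpermK. Qed.

Lemma esum_sqw k c : esum (sqw k c) = ((if c then 1 else -1) * (2 * k)%:Z)%R.
Proof. elim: k => [|k IH] /=; first by rewrite mulr0. rewrite IH. case: c IH => _; lia. Qed.

Lemma even_pure n w : valid_word n w -> pure n w -> (`|esum w|%N %% 2 = 0)%N.
Proof. move=> V P. by rewrite modn2 (hatS_word V) P odd_perm1. Qed.

Lemma esum_a i m : esum (a_word i m) = 2%R.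
Proof. rewrite a_wordE !esum_cat esum_winv /=. lia. Qed.

Theorem mainTheorem15 (n : nat) (hn : 2 <= n) :
  ((forall u v, valid_word n u -> braid_eq n u v -> p_word n u = p_word n v) /\
   (forall u v, p_word n (u ++ v) =
      (((p_word n u).1 * (p_word n v).1)%g, ((p_word n u).2 + (p_word n v).2)%R)) /\
   (forall w, valid_word n w -> in_hatS (p_word n w))) /\
  (forall x : 'S_n * int, in_hatS x ->
     exists w, valid_word n w /\ p_word n w = x) /\
  (exists phi, is_qn_map n phi) /\
  (forall phi, is_qn_map n phi ->
     forall w, valid_word n w ->
       (p_word n w = (1%g, 0%R) <-> pure n w /\ phi w = 0%R)).
Proof.
split; [split; [|split]|split; [|split]].
- move=> u v _ E. by rewrite /p_word (be_perm E) (be_esum E).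
- move=> u v. by rewrite /p_word perm_of_cat esum_cat.
- move=> w Vw. by rewrite /in_hatS /p_word /= (hatS_word Vw).
- case=> s d. rewrite /in_hatS /= => /eqP Hd.
  have [w0 [V0 P0]] := reach_all s.
  have Hpar : (`|d|%N %% 2 = `|esum w0|%N %% 2)%N by rewrite !modn2 Hd (hatS_word V0) P0.
  have [t Ht] : exists t : int, d = (esum w0 + 2 * t)%R.
    exists (divz (d - esum w0) 2). lia.
  case: t Ht => k Ht.
  + exists (w0 ++ sqw k true). split; first by rewrite valid_cat V0 valid_sqw.
    rewrite /p_word perm_of_cat perm_sqw mulg1 P0 esum_cat esum_sqw. congr pair. lia.
  + exists (w0 ++ sqw k.+1 false). split; first by rewrite valid_cat V0 valid_sqw.
    rewrite /p_word perm_of_cat perm_sqw mulg1 P0 esum_cat esum_sqw. congr pair.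
    rewrite NegzE in Ht. lia.
- exists (fun w => divz (esum w) 2). split.
  + move=> u v Vu Vv _ _ E. by rewrite (be_esum E).
  + move=> u v Vu Vv Pu Pv. rewrite esum_cat.
    have := even_pure Vu Pu. have := even_pure Vv Pv. lia.
  + move=> i j _ _. by rewrite esum_a.
- move=> phi [Hinv Hadd Ha] w Vw.
  pose psi := fun w => (phi w - divz (esum w) 2)%R.
  have G : good n psi.
    split.
    * move=> u v Vu Vv Pu Pv E. by rewrite /psi (Hinv u v) // (be_esum E).
    * move=> u v Vu Vv Pu Pv. rewrite /psi Hadd // esum_cat.
      have := even_pure Vu Pu. have := even_pure Vv Pv. lia.
    * move=> i j Hij Hj. by rewrite /psi Ha // esum_a.
  have Key : pure n w -> phi w = divz (esum w) 2.
    move=> Pw. have := psi_zero G (leqnn n) Vw Pw. rewrite /psi. lia.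
  split.
  + rewrite /p_word => -[Pw Ew]. split => //. by rewrite Key // Ew.
  + case=> Pw Hw. rewrite /p_word Pw. congr pair.
    have := Key Pw. have := even_pure Vw Pw. rewrite Hw. lia.
Qed.
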